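(* Let $S$ be a semigroup with a subsemigroup $T$ such that $S\setminus T$ is an ideal of $S$. If $S$ is finitely right equated then so is $T$.
   Context: For a semigroup $S$ and $a\in S$, $\mathbf{r}_S(a)=\{(s,t)\in S\times S\mid as=at\}$; $S$ is finitely right equated if each $\mathbf{r}_S(a)$ is finitely generated as a right congruence (the smallest right congruence containing some finite set). *)

(* Defs.v *)
From Stdlib Require Import List ProofIrrelevance.

Record semigroup := Semigroup {
  carrier :> Type;
  sop : carrier -> carrier -> carrier;
  sop_assoc : forall x y z, sop x (sop y z) = sop (sop x y) z
}.

Arguments sop {s} _ _.

Definition subsemigroup_closed (S : semigroup) (T : S -> Prop) : Prop :=
  forall x y, T x -> T y -> T (sop x y).

Definition is_ideal (S : semigroup) (I : S -> Prop) : Prop :=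
  forall s u, I u -> I (sop s u) /\ I (sop u s).

Definition sub_op (S : semigroup) (T : S -> Prop) (HT : subsemigroup_closed S T)
  (a b : {x : S | T x}) : {x : S | T x} :=
  exist _ (sop (proj1_sig a) (proj1_sig b)) (HT _ _ (proj2_sig a) (proj2_sig b)).

Arguments sub_op {S T} HT a b.

Lemma sub_op_assoc (S : semigroup) (T : S -> Prop) (HT : subsemigroup_closed S T) :
  forall x y z, sub_op HT x (sub_op HT y z) = sub_op HT (sub_op HT x y) z.
Proof.
  intros [x hx] [y hy] [z hz]. unfold sub_op; simpl.
  apply eq_sig_hprop.
  - intros w p q. apply proof_irrelevance.
  - simpl. apply sop_assoc.
Qed.

Arguments sub_op_assoc {S T} HT x y z.

Definition sub_semigroup (S : semigroup) (T : S -> Prop)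
  (HT : subsemigroup_closed S T) : semigroup :=
  @Semigroup {x : S | T x} (sub_op HT) (sub_op_assoc HT).

Definition r_ann (S : semigroup) (a : S) (s t : S) : Prop := sop a s = sop a t.

Definition right_congruence (S : semigroup) (R : S -> S -> Prop) : Prop :=
  (forall x, R x x) /\ (forall x y, R x y -> R y x) /\
  (forall x y z, R x y -> R y z -> R x z) /\
  (forall x y u, R x y -> R (sop x u) (sop y u)).

Definition rc_generated (S : semigroup) (X : S * S -> Prop) (s t : S) : Prop :=
  forall R, right_congruence S R -> (forall p, X p -> R (fst p) (snd p)) -> R s t.

Definition finitely_right_equated (S : semigroup) : Prop :=
  forall a : S, exists l : list (S * S),
    forall s t, r_ann S a s t <-> rc_generated S (fun p => In p l) s t.

Arguments sub_semigroup {S T} HT.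

(* Main.v *)
Require Import Defs.
From Stdlib Require Import List ProofIrrelevance Classical ClassicalEpsilon.

Section Aux.
Variable (S : semigroup) (T : S -> Prop).

Fixpoint filt (l : list (S * S)) : list ({x : S | T x} * {x : S | T x}) :=
  match l with
  | nil => nil
  | (c, d) :: l' =>
    match excluded_middle_informative (T c /\ T d) with
    | left h => (exist _ c (proj1 h), exist _ d (proj2 h)) :: filt l'
    | right _ => filt l'
    end
  end.

Lemma filt_in1 l p : In p (filt l) -> In (proj1_sig (fst p), proj1_sig (snd p)) l.
Proof.
  induction l as [|[c d] l IH]; simpl; [tauto|].
  destruct (excluded_middle_informative (T c /\ T d)) as [h|h]; simpl.
  - intros [<-|H]; [left; reflexivity|right; auto].
  - intros H; right; auto.
Qed.

Lemma filt_in2 l c d (hc : T c) (hd : T d) :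
  In (c, d) l -> In (exist _ c hc, exist _ d hd) (filt l).
Proof.
  induction l as [|[c' d'] l IH]; simpl; [tauto|].
  destruct (excluded_middle_informative (T c' /\ T d')) as [h|h]; simpl.
  - intros [E|H]; [left|right; auto].
    injection E; intros; subst.
    f_equal; f_equal; apply proof_irrelevance.
  - intros [E|H]; [|auto]. injection E; intros; subst. exfalso; tauto.
Qed.
End Aux.

Theorem mainTheorem16 (S : semigroup) (T : S -> Prop)
  (HT : subsemigroup_closed S T)
  (Hideal : is_ideal S (fun x => ~ T x)) :
  finitely_right_equated S -> finitely_right_equated (sub_semigroup HT).
Proof.
  intros HS [a ha].
  destruct (HS a) as [l Hl].
  exists (filt S T l).
  assert (Hgen : forall c d, In (c, d) l -> sop a c = sop a d).
  { intros c d Hin. apply (proj2 (Hl c d)). intros R _ HR. apply (HR (c, d) Hin). }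
  intros [s hs] [t ht]. unfold r_ann; simpl. split.
  - intros E R HR Hgl.
    set (R' := fun x y : sub_semigroup HT => R x y /\ sop a (proj1_sig x) = sop a (proj1_sig y)).
    assert (HR' : right_congruence (sub_semigroup HT) R').
    { destruct HR as (Hr & Hs & Ht & Hc). unfold R'. split; [|split; [|split]].
      - intros x; split; auto.
      - intros x y [H1 H2]; split; auto.
      - intros x y z [H1 H2] [H3 H4]; split; [eauto| congruence].
      - intros x y u [H1 H2]; split; auto.
        destruct x, y, u; simpl in *. rewrite !sop_assoc, H2; reflexivity. }
    set (RS := fun x y : S =>
      (exists hx hy, R' (exist _ x hx) (exist _ y hy)) \/ (~ T (sop a x) /\ sop a x = sop a y)).
    assert (HRS : right_congruence S RS).
    { destruct HR' as (Hr & Hs & Ht & Hc). unfold RS. split; [|split; [|split]].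
      - intros x. destruct (classic (T x)) as [hx|hx].
        + left; exists hx, hx; apply Hr.
        + right; split; auto. apply (Hideal a x hx).
      - intros x y [(hx & hy & H)|[H1 H2]].
        + left; exists hy, hx; auto.
        + right; split; [rewrite <- H2|]; auto.
      - intros x y z [(hx & hy & H)|[H1 H2]] [(hy' & hz & H')|[H1' H2']].
        + left; exists hx, hz. apply (Ht _ (exist _ y hy)); auto.
          replace hy with hy' by apply proof_irrelevance; auto.
        + exfalso; apply H1'. apply HT; auto.
        + exfalso; apply H1. rewrite H2. apply HT; auto.
        + right; split; congruence.
      - intros x y u [(hx & hy & H)|[H1 H2]].
        + destruct (classic (T u)) as [hu|hu].
          * left. exists (HT _ _ hx hu), (HT _ _ hy hu).
            apply (Hc _ _ (exist _ u hu) H).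
          * right. destruct H as [_ H]; simpl in H. split.
            -- apply (proj1 (Hideal a (sop x u) (proj1 (Hideal x u hu)))).
            -- rewrite !sop_assoc, H; reflexivity.
        + right. split.
          * rewrite sop_assoc. apply Hideal; auto.
          * rewrite !sop_assoc, H2; reflexivity. }
    assert (Hst : RS s t).
    { assert (E0 : sop a s = sop a t) by (apply (f_equal (@proj1_sig _ _)) in E; exact E).
      apply (proj1 (Hl s t) E0 RS HRS). intros [c d] Hin; simpl.
      pose proof (Hgen c d Hin) as Ecd. unfold RS.
      destruct (classic (T c /\ T d)) as [[hc hd]|hn].
      - left; exists hc, hd. split; [|exact Ecd].
        apply (Hgl (exist _ c hc, exist _ d hd)). apply filt_in2; auto.
      - right; split; auto. intros Hac.
        destruct (classic (T c)) as [hc|hc].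
        + assert (hd : ~ T d) by tauto. apply (proj1 (Hideal a d hd)). rewrite <- Ecd; auto.
        + apply (proj1 (Hideal a c hc)); auto. }
    destruct Hst as [(hs' & ht' & [H _])|[H1 _]].
    + replace hs with hs' by apply proof_irrelevance.
      replace ht with ht' by apply proof_irrelevance. exact H.
    + exfalso; apply H1. apply HT; auto.
  - intros Hg.
    set (R := fun x y : sub_semigroup HT => sop a (proj1_sig x) = sop a (proj1_sig y)).
    assert (HR : right_congruence (sub_semigroup HT) R).
    { unfold R. split; [|split; [|split]].
      - reflexivity.
      - intros; congruence.
      - intros; congruence.
      - intros [x hx] [y hy] [u hu] H; simpl in *. rewrite !sop_assoc, H; reflexivity. }
    pose proof (Hg R HR) as H.
    apply eq_sig_hprop; [intros; apply proof_irrelevance|].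
    simpl. apply H.
    intros p Hp. apply filt_in1 in Hp. apply Hgen in Hp. exact Hp.
Qed.
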